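(* Let $d\ge1$ and $L\ge 1$ be integers and let $\Phi\in\mathbb{R}^{d\times d}$ be arbitrary. Consider the loss $$\mathcal{R}(W_1,\dots,W_L)=\tfrac12\|W_LW_{L-1}\cdots W_1-\Phi\|_F^2,\qquad W_l\in\mathbb{R}^{d\times d},$$ and discrete-time gradient descent with fixed learning rate $\eta>0$, $$W_l(t+1)=W_l(t)-\eta\nabla_l\mathcal{R}(t),\qquad l=1,\dots,L,\ t=0,1,2,\dots,$$ started from the zero-asymmetric initialization $W_l(0)=I$ for $l=1,\dots,L-1$ and $W_L(0)=0$. Let $\phi=\max\{2\|\Phi\|_F,\,3L^{-1/2},\,1\}$. If $$\eta\le\min\left\{(4L^3\phi^6)^{-1},\ (144L^2\phi^4)^{-1}\right\},$$ then $$\mathcal{R}(t)\le\left(1-\frac{\eta}{2}\right)^t\mathcal{R}(0)\qquad\text{for all } t=0,1,2,\dots$$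
   Context: For $l_2\ge l_1$ write $W_{l_2:l_1}=W_{l_2}W_{l_2-1}\cdots W_{l_1}$, and an empty product is the identity matrix $I\in\mathbb{R}^{d\times d}$. The gradient of $\mathcal{R}$ with respect to $W_l$ is $\nabla_l\mathcal{R}=W_{L:l+1}^\intercal(W_{L:1}-\Phi)W_{l-1:1}^\intercal$. $\mathcal{R}(t)$ and $\nabla_l\mathcal{R}(t)$ denote the loss and gradient evaluated at the iterate $(W_1(t),\dots,W_L(t))$. $\|\cdot\|_F$ is the Frobenius norm. *)

(* Defs.v *)
From mathcomp Require Import all_boot all_order all_algebra.
From mathcomp Require Import reals.
Set Implicit Arguments. Unset Strict Implicit. Unset Printing Implicit Defensive.
Import Order.TTheory GRing.Theory Num.Theory.
Local Open Scope ring_scope.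

Section Defs.
Variables (R : realType) (d : nat).

(* A family of weights: W l for l = 1..L (values at other indices are irrelevant). *)
Definition weights := nat -> 'M[R]_d.

(* prodW W l2 l1 = W l2 *m W (l2-1) *m ... *m W l1 for l2 >= l1;
   the empty product (l2 < l1) is the identity matrix. *)
Fixpoint prodW_aux (W : weights) (l1 : nat) (k : nat) : 'M[R]_d :=
  match k with
  | 0 => 1%:M
  | k'.+1 => W (l1 + k')%N *m prodW_aux W l1 k'
  end.
Definition prodW (W : weights) (l2 l1 : nat) : 'M[R]_d :=
  prodW_aux W l1 (l2.+1 - l1)%N.

Definition frob (A : 'M[R]_d) : R :=
  Num.sqrt (\sum_(i < d) \sum_(j < d) A i j ^+ 2).

Definition loss (L : nat) (Phi : 'M[R]_d) (W : weights) : R :=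
  2^-1 * frob (prodW W L 1 - Phi) ^+ 2.

Definition grad (L : nat) (Phi : 'M[R]_d) (W : weights) (l : nat) : 'M[R]_d :=
  (prodW W L l.+1)^T *m (prodW W L 1 - Phi) *m (prodW W l.-1 1)^T.

Definition init (L : nat) : weights :=
  fun l => if l == L then 0 else 1%:M.

Fixpoint gd (L : nat) (Phi : 'M[R]_d) (eta : R) (t : nat) : weights :=
  match t with
  | 0 => init L
  | t'.+1 => let W := gd L Phi eta t' in
             fun l => W l - eta *: grad L Phi W l
  end.

End Defs.

(* Main.v *)
Require Import Defs.
From mathcomp Require Import all_boot all_order all_algebra.
From mathcomp Require Import reals.
From mathcomp Require Import complex.
From mathcomp Require Import ring lra zify.
Set Implicit Arguments. Unset Strict Implicit. Unset Printing Implicit Defensive.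
Import Order.TTheory GRing.Theory Num.Theory.
Local Open Scope ring_scope.

Lemma spectral_trace (R : realType) (n : nat) (S : 'M[R]_n.+1) :
  S^T = S ->
  exists lam : 'I_n.+1 -> R, forall g : {poly R},
    \tr (horner_mx S g) = \sum_i g.[lam i].
Proof.
move=> Ssym.
pose f := real_complex R.
pose Sc := map_mx f S.
have herm : Sc \is hermsymmx.
  apply/is_hermitianmxP; rewrite expr0 scale1r.
  apply/matrixP => i j; rewrite !mxE.
  have -> : S j i = S i j by rewrite -{1}Ssym mxE.
  exact: (esym (conjc_real _)).
have /orthomx_spectralP Sc_eq := hermitian_normalmx herm.
have Dreal := hermitian_spectral_diag_real herm.
set P := spectralmx Sc in Sc_eq.
set D := spectral_diag Sc in Sc_eq Dreal.
exists (fun i => complex.Re (D 0 i)) => g.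
apply: (fmorph_inj f).
rewrite -trace_map_mx map_horner_mx -/Sc Sc_eq.
have PU : P \in unitmx by apply: spectral_unit.
have -> : invmx P *m diag_mx D *m P = invmx P *m diag_mx D *m invmx (invmx P) by rewrite invmxK.
rewrite horner_mx_uconj; last by rewrite unitmx_inv.
rewrite mxtrace_mulC mulmxA mulVmx ?mul1mx; last by rewrite unitmx_inv.
rewrite horner_mx_diag mxtrace_diag rmorph_sum; apply: eq_bigr => i _.
rewrite !mxE -horner_map /=; congr (_.[_]).
rewrite complexRe; apply/esym/Creal_ReP.
by move/mxOverP: Dreal; apply.
Qed.


Lemma horner_mx_symG (R : comNzRingType) n (S : 'M[R]_n.+1) (g : {poly R}) :
  S^T = S -> (horner_mx S g)^T = horner_mx S g.
Proof.
move=> Ssym; elim/poly_ind: g => [|p c IH]; first by rewrite rmorph0 trmx0.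
rewrite rmorphD rmorphM /= horner_mx_X horner_mx_C linearD /= tr_scalar_mx -mulmxE.
rewrite trmx_mul IH Ssym.
by rewrite (comm_mx_horner p (erefl _ : comm_mx S S)).
Qed.

Lemma tr_sq (R : pzRingType) n m (A : 'M[R]_(n, m)) :
  \tr (A *m A^T) = \sum_i \sum_j A i j ^+ 2.
Proof.
rewrite /mxtrace; apply: eq_bigr => i _; rewrite mxE.
by apply: eq_bigr => j _; rewrite !mxE expr2.
Qed.

Lemma eig_nonneg (R : realType) n (Phi : 'M[R]_n.+1) (lam : 'I_n.+1 -> R) :
  (forall g, \tr (horner_mx (Phi^T *m Phi) g) = \sum_i g.[lam i]) ->
  forall i, 0 <= lam i.
Proof.
move=> Htr i.
set S := Phi^T *m Phi.
have Ssym : S^T = S by rewrite /S trmx_mul trmxK.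
pose g := \prod_(j | lam j != lam i) ('X - (lam j)%:P).
have Hg j : g.[lam j] = if lam j == lam i then g.[lam i] else 0.
  case: eqP => [->//|/eqP ne].
  by rewrite horner_prod (bigD1 j) //= hornerXsubC subrr mul0r.
have gi0 : g.[lam i] != 0.
  rewrite horner_prod; apply/prodf_neq0 => j ne.
  by rewrite hornerXsubC subr_eq0 eq_sym.
have H1 : 0 <= \tr (horner_mx S ('X * g * g)).
  rewrite !rmorphM /= horner_mx_X -!mulmxE.
  set G := horner_mx S g.
  have GT : G^T = G := horner_mx_symG g Ssym.
  rewrite /S -!mulmxA mxtrace_mulC -!mulmxA.
  have -> : Phi *m (G *m (G *m Phi^T)) = (Phi *m G) *m (Phi *m G)^T.
    by rewrite trmx_mul GT !mulmxA.
  rewrite tr_sq; apply: sumr_ge0 => ? _; apply: sumr_ge0 => ? _; apply: sqr_ge0.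
rewrite Htr in H1.
have E : \sum_j ('X * g * g).[lam j] =
   lam i * (g.[lam i] ^+ 2 * (#|[pred j | lam j == lam i]|)%:R).
  transitivity (\sum_j (if lam j == lam i then lam i * g.[lam i] ^+ 2 else 0)).
    apply: eq_bigr => j _; rewrite !hornerM hornerX (Hg j).
    by case: eqP => [->|_]; rewrite ?mulr0 // expr2 mulrA.
  rewrite -(big_mkcond (fun j => lam j == lam i) (fun=> lam i * g.[lam i]^+2)) /=.
  transitivity ((lam i * g.[lam i]^+2) *+ #|[pred j | lam j == lam i]|); first exact: sumr_const.
  by rewrite -mulr_natr -mulrA.
rewrite E in H1.
have cpos : (0 < #|[pred j | lam j == lam i]|)%N.
  by apply/card_gt0P; exists i; rewrite inE eqxx.
have Kpos : 0 < g.[lam i] ^+ 2 * (#|[pred j | lam j == lam i]|)%:R.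
  by rewrite mulr_gt0 ?ltr0n // exprn_even_gt0.
by rewrite pmulr_lge0 in H1.
Qed.


Section Scalar.
Variable R : realType.

Lemma bern (dl : R) (n : nat) : 0 <= dl -> 2 * n%:R * dl <= 1 ->
  (1 + dl) ^+ n <= 1 + 2 * n%:R * dl.
Proof.
move=> d0; elim: n => [|n IH] H; first by rewrite expr0 mulr0 mul0r addr0.
have Hn : 2 * n%:R * dl <= 1.
  apply: le_trans H; rewrite -addn1 natrD; nra.
rewrite exprSr; apply: (le_trans (ler_wpM2r _ (IH Hn))); first lra.
move: H; rewrite -addn1 natrD => H.
have n0 : 0 <= n%:R :> R by [].
nra.
Qed.

Lemma step_bound (n : nat) (eta lam Lam a b : R) :
  0 < eta -> 0 <= lam -> lam <= Lam -> 4 * eta * (1 + n%:R * Lam) <= 1 ->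
  1 <= a -> 0 <= b -> b * a ^+ n <= 1 -> a ^+ n * a ^+ n <= 2 + 2 * n%:R * Lam ->
  forall c b' a', c = b * a ^+ n - 1 ->
  b' = b - eta * c * a ^+ n ->
  a' = a - eta * (lam * b * c * a ^+ n.-1) ->
  [/\ a <= a', b <= b' & (1 - eta) * c <= b' * a' ^+ n - 1 <= 0].
Proof.
move=> e0 l0 lL eC a1 b0 u1 KB c b' a' cE b'E0 a'E0.
have n0 : 0 <= n%:R :> R by [].
have L0 : 0 <= Lam by lra.
set A := a ^+ n in u1 KB cE b'E0 a'E0 *.
set A1 := a ^+ n.-1 in a'E0 *.
have A1ge : 1 <= A1 by apply: exprn_ege1.
have Age : 1 <= A by apply: exprn_ege1.
have A1A : A1 <= A by rewrite /A1 /A ler_weXn2l // leq_pred.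
set u := b * A in u1 cE b'E0 a'E0 *.
have u0 : 0 <= u by rewrite /u mulr_ge0 //; lra.
set s := 1 - u.
have s0 : 0 <= s by rewrite /s; lra.
have s1 : s <= 1 by rewrite /s; lra.
have cs : c = - s by rewrite cE /s; ring.
have bA1 : b * A1 <= u by rewrite /u ler_wpM2l.
have bA10 : 0 <= b * A1 by rewrite mulr_ge0 //; lra.
set eps := eta * lam * s * (b * A1).
have eps0 : 0 <= eps by rewrite /eps !mulr_ge0 //; lra.
have epsB : eps <= eta * Lam * s.
  rewrite /eps; have : eta * lam * s <= eta * Lam * s.
    by rewrite ler_wpM2r ?ler_wpM2l //; lra.
  have : 0 <= eta * lam * s by rewrite !mulr_ge0 //; lra.
  have : b * A1 <= 1 by lra.
  nra.
have a'E : a' = a + eps by rewrite a'E0 /eps cs; ring.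
have b'E : b' = b + eta * s * A by rewrite b'E0 cs; ring.
have aa' : a <= a' by rewrite a'E; lra.
have bb' : b <= b'.
  rewrite b'E; have : 0 <= eta * s * A by rewrite !mulr_ge0 //; lra.
  lra.
split => //.
set Ap := a' ^+ n.
have ApA : A <= Ap by rewrite /Ap /A lerXn2r // nnegrE; lra.
have b'0 : 0 <= b' by lra.
have b'A : b' * A = u + eta * s * (A * A) by rewrite b'E /u; ring.
apply/andP; split.
  have : b' * A <= b' * Ap by rewrite ler_wpM2l.
  have : eta * s * 1 <= eta * s * (A * A).
    rewrite ler_wpM2l ?mulr_ge0 //; try lra.
    by rewrite -[1]mulr1 ler_pM //; lra.
  have sE : u = 1 - s by rewrite /s; ring.
  rewrite cs; move: b'A; rewrite sE; nra.
set dl := eps / a.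
have a0 : 0 < a by lra.
have dl0 : 0 <= dl by rewrite /dl divr_ge0 //; lra.
have dleps : dl <= eps by rewrite /dl ler_pdivrMr // ler_peMr //.
have a'E2 : a' = a * (1 + dl) by rewrite a'E /dl mulrDr mulr1 mulrCA divff ?mulr1 // gt_eqF.
have ApE : Ap = A * (1 + dl) ^+ n by rewrite /Ap a'E2 exprMn.
have s01 : 0 <= s <= 1 by rewrite /s; apply/andP; split; lra.
have T : (1 + dl) ^+ n <= 1 + 2 * n%:R * dl.
  apply: bern => //.
  have : 2 * n%:R * dl <= 2 * n%:R * (eta * Lam * s).
    by rewrite ler_wpM2l ?mulr_ge0 //; lra.
  have : eta * Lam * s <= eta * Lam by rewrite ler_piMr ?mulr_ge0 //; lra.
  have : 0 <= eta * n%:R * Lam by rewrite !mulr_ge0 //; lra.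
  nra.
have T2 : (1 + dl) ^+ n <= 1 + 2 * n%:R * (eta * Lam * s).
  apply: (le_trans T); have : 2 * n%:R * dl <= 2 * n%:R * (eta * Lam * s).
    by rewrite ler_wpM2l ?mulr_ge0 //; lra.
  lra.
have b'Ap : b' * Ap <= (u + eta * s * (A * A)) * (1 + 2 * n%:R * (eta * Lam * s)).
  by rewrite ApE mulrA b'A ler_wpM2l // addr_ge0 // !mulr_ge0 //; lra.
set K := A * A in KB b'A b'Ap.
have K0 : 0 <= K by rewrite /K mulr_ge0 //; lra.
set beta := 2 * n%:R * eta * Lam.
have beta0 : 0 <= beta by rewrite /beta !mulr_ge0 //; lra.
have etaK : eta * K + beta <= 1.
  have : eta * K <= eta * (2 + 2 * n%:R * Lam) by rewrite ler_wpM2l //; lra.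
  rewrite /beta; lra.
have : (u + eta * s * K) * (1 + 2 * n%:R * (eta * Lam * s)) = (1 - s * (1 - eta * K)) * (1 + beta * s).
  by rewrite /beta /s; ring.
move=> E; rewrite E in b'Ap.
have : 0 <= s * beta * s by rewrite !mulr_ge0 //; lra.
have : 0 <= s * (1 - eta * K) * (beta * s) by rewrite !mulr_ge0 //; lra.
have : beta * s <= (1 - eta * K) * s by rewrite ler_wpM2r //; lra.
lra.
Qed.


Lemma kbound (n : nat) (lam Lam a b : R) :
  0 <= lam -> lam <= Lam -> 1 <= a -> 0 <= b -> b * a ^+ n <= 1 ->
  a * a - lam * b * b <= 1 -> a ^+ n * a ^+ n <= 2 + 2 * n%:R * Lam.
Proof.
move=> l0 lL a1 b0 u1 D1.
have n0 : 0 <= n%:R :> R by [].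
have u0 : 0 <= b * a ^+ n by rewrite mulr_ge0 // exprn_ge0 //; lra.
set x := lam * b * b in D1 *.
have x0 : 0 <= x by rewrite /x !mulr_ge0.
have KE : a ^+ n * a ^+ n = (a * a) ^+ n by rewrite exprMn.
have Kx : (a * a) ^+ n <= (1 + x) ^+ n.
  apply: lerXn2r; rewrite ?nnegrE; first (by rewrite mulr_ge0 //; lra); lra.
rewrite KE.
have [H|H] := lerP (2 * n%:R * x) 1.
  have := bern x0 H; have : 0 <= 2 * n%:R * Lam by rewrite !mulr_ge0 //; lra.
  lra.
have KxL : (a * a) ^+ n * x <= Lam.
  have -> : (a * a) ^+ n * x = lam * ((b * a ^+ n) * (b * a ^+ n)).
    by rewrite /x exprMn; ring.
  have : (b * a ^+ n) * (b * a ^+ n) <= 1 by nra.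
  move=> h; apply: le_trans lL; rewrite -[X in _ <= X]mulr1; by rewrite ler_wpM2l.
have K0 : 0 <= (a * a) ^+ n by rewrite exprn_ge0 // mulr_ge0 //; lra.
nra.
Qed.

Lemma dstep (m : nat) (eta lam Lam a b : R) :
  0 < eta -> 0 <= lam -> lam <= Lam -> 4 * eta * (1 + m.+1%:R * Lam) <= 1 ->
  1 <= a -> 0 <= b * a ^+ m.+1 <= 1 ->
  a ^+ m.+1 * a ^+ m.+1 <= 2 + 2 * m.+1%:R * Lam ->
  0 <= a * a - lam * b * b <= 1 ->
  forall c b' a', c = b * a ^+ m.+1 - 1 ->
  b' = b - eta * c * a ^+ m.+1 ->
  a' = a - eta * (lam * b * c * a ^+ m) ->
  0 <= a' * a' - lam * b' * b' <= 1.
Proof.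
move=> e0 l0 lL eC a1 /andP[u0 u1] KB /andP[D0 D1] c b' a' cE b'E a'E.
have n0 : 0 <= m.+1%:R :> R by [].
have L0 : 0 <= Lam by lra.
set y := a ^+ m in a'E *.
have y0 : 0 <= y by rewrite exprn_ge0 //; lra.
have yE : a ^+ m.+1 = a * y by rewrite exprS.
rewrite yE in u0 u1 KB cE b'E.
have DE : a' * a' - lam * b' * b' =
   (a * a - lam * b * b) * (1 - eta * eta * lam * (c * c) * (y * y)).
  by rewrite a'E b'E; ring.
rewrite DE.
have c2 : c * c <= 1 by rewrite cE; nra.
have c20 : 0 <= c * c by rewrite -expr2 sqr_ge0.
have yy : y * y <= a * y * (a * y).
  have : y <= a * y by rewrite ler_peMl //.
  nra.
set Q := 1 + m.+1%:R * Lam.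
have LQ : Lam <= Q.
  rewrite /Q; have : Lam <= m.+1%:R * Lam by rewrite ler_peMl // ler1n.
  lra.
have eQ : eta * Q <= 1/4 by rewrite /Q; lra.
have KQ : a * y * (a * y) <= 2 * Q by rewrite /Q; lra.
have h1 : lam * (c * c) <= Lam by rewrite -[Lam]mulr1; apply: ler_pM.
have h2 : lam * (c * c) * (y * y) <= Lam * (2 * Q).
  apply: ler_pM => //; [by rewrite mulr_ge0 | by rewrite mulr_ge0 | lra].
have f1 : eta * eta * lam * (c * c) * (y * y) <= eta * eta * Q * (1 * (2 * Q)).
  have -> : eta * eta * lam * (c * c) * (y * y) = eta * eta * (lam * (c * c) * (y * y)) by ring.
  have -> : eta * eta * Q * (1 * (2 * Q)) = eta * eta * (Q * (2 * Q)) by ring.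
  rewrite ler_wpM2l ?mulr_ge0 //; try lra.
  apply: (le_trans h2); rewrite ler_wpM2r //; lra.
have f0 : 0 <= eta * eta * lam * (c * c) * (y * y).
  have ee : 0 <= eta * eta * lam by rewrite !mulr_ge0 //; lra.
  by apply: mulr_ge0; [apply: mulr_ge0 | apply: mulr_ge0].
have : eta * eta * Q * (1 * (2 * Q)) <= 1.
  have eQ0 : 0 <= eta * Q by rewrite mulr_ge0 //; lra.
  have -> : eta * eta * Q * (1 * (2 * Q)) = 2 * ((eta * Q) * (eta * Q)) by ring.
  nra.
move=> h.
apply/andP; split; first by rewrite mulr_ge0 //; lra.
apply: (le_trans _ D1).
rewrite -[X in _ <= X]mulr1 ler_wpM2l //; lra.
Qed.

Lemma scalar_main (n : nat) (eta lam Lam : R) (a b : nat -> R) :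
  0 < eta -> 0 <= lam -> lam <= Lam -> 4 * eta * (1 + n%:R * Lam) <= 1 ->
  a 0%N = 1 -> b 0%N = 0 ->
  (forall t, b t.+1 = b t - eta * (b t * a t ^+ n - 1) * a t ^+ n) ->
  (forall t, a t.+1 = a t - eta * (lam * b t * (b t * a t ^+ n - 1) * a t ^+ n.-1)) ->
  forall t, (b t * a t ^+ n - 1) ^+ 2 <= (1 - eta / 2) ^+ t.
Proof.
move=> e0 l0 lL eC a0 b0 bS aS.
have n0 : 0 <= n%:R :> R by [].
have L0 : 0 <= Lam by lra.
have e1 : eta <= 1/4.
  have : 0 <= eta * (n%:R * Lam) by rewrite !mulr_ge0 //; lra.
  lra.
suff H : forall t, [/\ 1 <= a t /\ 0 <= b t, 0 <= b t * a t ^+ n <= 1,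
   a t ^+ n * a t ^+ n <= 2 + 2 * n%:R * Lam,
   ((0 < n)%N -> 0 <= a t * a t - lam * b t * b t <= 1) &
   (b t * a t ^+ n - 1) ^+ 2 <= (1 - eta / 2) ^+ t].
  by move=> t; case: (H t).
elim => [|t [[a1 bt0] /andP[u0 u1] KB DB IH]].
  rewrite a0 b0 expr1n mul0r sub0r expr0 sqrrN expr1n; split.
  - split; lra.
  - by rewrite lexx ler01.
  - rewrite mulr1; have : 0 <= 2 * n%:R * Lam by rewrite !mulr_ge0 //; lra.
    lra.
  - by move=> _; rewrite mulr1 !mulr0 subr0 lexx ler01.
  - by [].
have [aa' bb' /andP[cl cu]] := step_bound e0 l0 lL eC a1 bt0 u1 KB
   (erefl _) (bS t) (aS t).
have a1' : 1 <= a t.+1 by lra.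
have b0' : 0 <= b t.+1 by lra.
have u0' : 0 <= b t.+1 * a t.+1 ^+ n by rewrite mulr_ge0 // exprn_ge0 //; lra.
have u1' : b t.+1 * a t.+1 ^+ n <= 1 by lra.
have DB' : (0 < n)%N -> 0 <= a t.+1 * a t.+1 - lam * b t.+1 * b t.+1 <= 1.
  move=> n0'.
  have := aS t; have := bS t; move: eC KB u0 u1.
  rewrite -(prednK n0') /= => eC' KB' u0'' u1'' bS' aS'.
  apply: (dstep e0 l0 lL eC' a1 _ KB' (DB n0') (erefl _) bS' aS').
  by apply/andP.
split => //.
- by apply/andP.
- have [n0e|npos] := posnP n.
    by rewrite n0e expr0 mulr1 mulr0 mul0r addr0; lra.
  have /andP[_ D1'] := DB' npos.
  exact: kbound l0 lL a1' b0' u1' D1'.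
set C := b t * a t ^+ n - 1 in cl cu IH *.
set C' := b t.+1 * a t.+1 ^+ n - 1 in cl cu *.
have C0 : C <= 0 by rewrite /C; lra.
have h1 : C' ^+ 2 <= ((1 - eta) * C) ^+ 2.
  rewrite -sqrrN -[X in _ <= X]sqrrN; apply: lerXn2r; rewrite ?nnegrE; try lra.
have h2 : (1 - eta) ^+ 2 <= 1 - eta / 2 by rewrite expr2; nra.
have C20 : 0 <= C ^+ 2 by apply: sqr_ge0.
rewrite exprSr; apply: (le_trans h1); rewrite exprMn.
have rho0 : 0 <= 1 - eta / 2 by lra.
apply: (le_trans (ler_wpM2r C20 h2)).
by rewrite [_ * C ^+ 2]mulrC [(1 - eta / 2) ^+ t.+1]exprSr; apply: ler_wpM2r.
Qed.

End Scalar.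


Section Mat.
Variables (R : realType) (d' : nat).
Notation d := d'.+1.

Lemma prodW_aux_const (W : weights R d) l1 k (P : 'M[R]_d) :
  (forall j, (j < k)%N -> W (l1 + j)%N = P) -> prodW_aux W l1 k = P ^+ k.
Proof.
elim: k => [|k IH] H; first by rewrite expr0 /= idmxE.
rewrite /= H // IH => [|j jk]; last by apply: H; apply: ltnW.
by rewrite exprS mulmxE.
Qed.

Lemma prodW_top (W : weights R d) L l1 (P : 'M[R]_d) :
  (l1 <= L)%N -> (forall j, (l1 <= j < L)%N -> W j = P) ->
  prodW W L l1 = W L *m P ^+ (L - l1).
Proof.
move=> lL H; rewrite /prodW subSn //= subnKC //.
congr (_ *m _); apply: prodW_aux_const => j jk; apply: H.
by rewrite leq_addr /= -ltn_subRL.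
Qed.

Lemma prodW_low (W : weights R d) l (P : 'M[R]_d) :
  (forall j, (1 <= j <= l)%N -> W j = P) -> prodW W l 1 = P ^+ l.
Proof.
move=> H; rewrite /prodW subn1 /=; apply: prodW_aux_const => j jl.
by apply: H; rewrite add1n ltnS /=.
Qed.

Lemma prodW_empty (W : weights R d) L : prodW W L L.+1 = 1%:M.
Proof. by rewrite /prodW subnn. Qed.


Lemma horner_mx_sym (S : 'M[R]_d) (g : {poly R}) :
  S^T = S -> (horner_mx S g)^T = horner_mx S g.
Proof.
move=> Ssym; elim/poly_ind: g => [|p c IH]; first by rewrite rmorph0 trmx0.
rewrite rmorphD rmorphM /= horner_mx_X horner_mx_C linearD /= tr_scalar_mx -mulmxE.
rewrite trmx_mul IH Ssym.
by rewrite (comm_mx_horner p (erefl _ : comm_mx S S)).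
Qed.

Definition pqstep (n : nat) (eta : R) (pq : {poly R} * {poly R}) : {poly R} * {poly R} :=
  let p := pq.1 in let q := pq.2 in let c := q * p ^+ n - 1 in
  (p - eta *: ('X * q * c * p ^+ n.-1), q - eta *: (c * p ^+ n)).
Definition pqseq n eta t := iter t (pqstep n eta) (1, 0).

Lemma rep (Phi : 'M[R]_d) (n : nat) (eta : R) t :
  (forall l, (1 <= l <= n)%N ->
     gd n.+1 Phi eta t l = horner_mx (Phi^T *m Phi) (pqseq n eta t).1) /\
  gd n.+1 Phi eta t n.+1 = Phi *m horner_mx (Phi^T *m Phi) (pqseq n eta t).2.
Proof.
set M := Phi^T *m Phi; set H := horner_mx M.
have Msym : M^T = M by rewrite /M trmx_mul trmxK.
have Hsym g : (H g)^T = H g := horner_mx_sym g Msym.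
have HX : H 'X = M := horner_mx_X M.
have L1 g h : (Phi *m H g)^T *m (Phi *m H h) = H (g * 'X * h).
  rewrite /H !rmorphM /= -/H HX -!mulmxE trmx_mul Hsym /M !mulmxA.
  by [].
have HM g h : H g *m H h = H (g * h) by rewrite /H rmorphM /= mulmxE.
have HXn g k : (H g) ^+ k = H (g ^+ k) by rewrite /H rmorphXn.
have HB g h : H g - H h = H (g - h) by rewrite /H rmorphB.
have HZ (a : R) g : a *: H g = H (a *: g) by rewrite /H linearZ.
have H1 : H 1 = 1%:M by rewrite /H rmorph1 idmxE.
have H0 : H 0 = 0 by rewrite /H rmorph0.
elim: t => [|t [IHl IHL]].
  split.
    move=> l /andP[l1 ln] /=; rewrite /init ifN; last by rewrite neq_ltn ltnS ln.
    by rewrite /= H1.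
  by rewrite /= /init eqxx H0 mulmx0.
set p := (pqseq n eta t).1 in IHl IHL *.
set q := (pqseq n eta t).2 in IHl IHL *.
set W := gd n.+1 Phi eta t in IHl IHL *.
have -> : pqseq n eta t.+1 = pqstep n eta (p, q).
  by rewrite /pqseq iterS -/(pqseq n eta t) [pqseq n eta t]surjective_pairing.
set c := q * p ^+ n - 1.
have top l1 : (1 <= l1 <= n.+1)%N -> prodW W n.+1 l1 = W n.+1 *m H p ^+ (n.+1 - l1).
  move=> /andP[l11 l1n]; apply: prodW_top => // j /andP[j1 jn].
  by apply: IHl; rewrite (leq_trans l11 j1) -ltnS.
have low l : (l <= n)%N -> prodW W l 1 = H p ^+ l.
  move=> ln; apply: prodW_low => j /andP[j1 jl].
  by apply: IHl; rewrite j1 (leq_trans jl ln).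
have E1 : prodW W n.+1 1 - Phi = Phi *m H c.
  rewrite top //.
  by rewrite IHL subn1 /= HXn -mulmxA HM /c -HB H1 mulmxBr mulmx1.
split.
  move=> l /andP[l1 ln].
  rewrite /= -/W /grad E1 IHl ?l1 //.
  have hl : (1 <= l.+1 <= n.+1)%N by apply/andP; split; last rewrite ltnS.
  have hl2 : (l.-1 <= n)%N by rewrite (leq_trans (leq_pred l)).
  rewrite (top _ hl) (low _ hl2).
  rewrite IHL !HXn -[Phi *m H q *m _]mulmxA HM L1 Hsym HM.
  rewrite HZ HB; congr (H _).
  rewrite /pqstep /= -/c; congr (_ - _ *: _).
  have -> : n.-1 = (n.+1 - l.+1 + l.-1)%N.
    by rewrite subSS; lia.
  by rewrite exprD; ring.
rewrite /= -/W /grad E1 IHL prodW_empty trmx1 mul1mx.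
rewrite low //.
rewrite /= HXn Hsym -mulmxA HM scalemxAr -mulmxBr HZ HB.
by [].
Qed.


Lemma loss_rep (Phi : 'M[R]_d) n eta t :
  loss n.+1 Phi (gd n.+1 Phi eta t) = 2^-1 * \tr (horner_mx (Phi^T *m Phi)
     (((pqseq n eta t).2 * (pqseq n eta t).1 ^+ n - 1) * 'X *
      ((pqseq n eta t).2 * (pqseq n eta t).1 ^+ n - 1))).
Proof.
have [IHl IHL] := rep Phi n eta t.
set M := Phi^T *m Phi in IHl IHL *; set H := horner_mx M in IHl IHL *.
set p := (pqseq n eta t).1 in IHl IHL *.
set q := (pqseq n eta t).2 in IHl IHL *.
set c := q * p ^+ n - 1.
set W := gd n.+1 Phi eta t in IHl IHL *.
have Msym : M^T = M by rewrite /M trmx_mul trmxK.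
have Hsym g : (H g)^T = H g := horner_mx_sym g Msym.
have HX : H 'X = M := horner_mx_X M.
have L1 g h : (Phi *m H g)^T *m (Phi *m H h) = H (g * 'X * h).
  rewrite /H !rmorphM /= -/H HX -!mulmxE trmx_mul Hsym /M !mulmxA.
  by [].
have HM g h : H g *m H h = H (g * h) by rewrite /H rmorphM /= mulmxE.
have HXn g k : (H g) ^+ k = H (g ^+ k) by rewrite /H rmorphXn.
have HB g h : H g - H h = H (g - h) by rewrite /H rmorphB.
have H1 : H 1 = 1%:M by rewrite /H rmorph1 idmxE.
have E1 : prodW W n.+1 1 - Phi = Phi *m H c.
  have side : forall j, (1 <= j < n.+1)%N -> W j = H p.
    by move=> j /andP[j1 jn]; apply: IHl; rewrite j1 -ltnS.
  rewrite (@prodW_top W n.+1 1 (H p) (erefl _) side).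
  by rewrite IHL subn1 /= HXn -mulmxA HM /c -HB H1 mulmxBr mulmx1.
rewrite /loss E1 /frob sqr_sqrtr; last first.
  by apply: sumr_ge0 => i _; apply: sumr_ge0 => j _; apply: sqr_ge0.
by rewrite -tr_sq mxtrace_mulC L1.
Qed.

End Mat.


Theorem theorem2 (R : realType) (d L : nat) (Phi : 'M[R]_d) (eta : R) :
  (1 <= d)%N -> (1 <= L)%N -> 0 < eta ->
  let phi := Num.max (Num.max (2 * frob Phi) (3 / Num.sqrt (L%:R))) 1 in
  eta <= Num.min (4 * L%:R ^+ 3 * phi ^+ 6)^-1 (144 * L%:R ^+ 2 * phi ^+ 4)^-1 ->
  forall t : nat,
    loss L Phi (gd L Phi eta t) <= (1 - eta / 2) ^+ t * loss L Phi (gd L Phi eta 0).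
Proof.
case: d Phi => [//|d'] Phi _; case: L => [//|n] _ e0 phi hη t.
set M := Phi^T *m Phi.
have [lam Htr] : exists lam : 'I_d'.+1 -> R, forall g, \tr (horner_mx M g) = \sum_i g.[lam i].
  by apply: spectral_trace; rewrite /M trmx_mul trmxK.
have lam0 := eig_nonneg Htr.
set Lam := \sum_i lam i.
have LamE : Lam = frob Phi ^+ 2.
  have := Htr 'X; rewrite horner_mx_X => HX.
  have -> : Lam = \sum_i 'X.[lam i] by apply: eq_bigr => i _; rewrite hornerX.
  rewrite -HX /frob sqr_sqrtr; last first.
    by apply: sumr_ge0 => i _; apply: sumr_ge0 => j _; apply: sqr_ge0.
  by rewrite /M mxtrace_mulC tr_sq.
have lamL i : lam i <= Lam.
  rewrite /Lam (bigD1 i) //= lerDl; apply: sumr_ge0 => j _; apply: lam0.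
have cond : 4 * eta * (1 + n%:R * Lam) <= 1.
  have phi1 : 1 <= phi by rewrite /phi le_max lexx orbT.
  have phi2 : 2 * frob Phi <= phi by rewrite /phi !le_max lexx.
  have f0 : 0 <= frob Phi by rewrite /frob sqrtr_ge0.
  have hB : eta <= (144 * n.+1%:R ^+ 2 * phi ^+ 4)^-1.
    by move: hη; rewrite le_min => /andP[].
  set X := n.+1%:R * phi ^+ 2.
  have N1 : 1 <= n.+1%:R :> R by rewrite ler1n.
  have P2 : 1 <= phi ^+ 2 by apply: exprn_ege1.
  have X1 : 1 <= X by rewrite /X mulr_ege1.
  have Bpos : 0 < 144 * n.+1%:R ^+ 2 * phi ^+ 4.
    by apply: mulr_gt0; [apply: mulr_gt0|]; rewrite ?exprn_gt0 //; lra.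
  have BX : 144 * n.+1%:R ^+ 2 * phi ^+ 4 = 144 * X * X.
    by rewrite /X; ring.
  have hB' : eta * (144 * X * X) <= 1.
    have := ler_wpM2r (ltW Bpos) hB; rewrite mulVf ?gt_eqF // BX.
    by [].
  have LamB : 4 * Lam <= phi ^+ 2.
    rewrite LamE; have : 0 <= 2 * frob Phi by lra.
    move=> h; rewrite expr2 [phi ^+ 2]expr2; nra.
  have nn : n%:R <= n.+1%:R :> R by rewrite ler_nat.
  have n0 : 0 <= n%:R :> R by [].
  have L0 : 0 <= Lam by rewrite LamE sqr_ge0.
  have nL : 4 * (n%:R * Lam) <= X.
    rewrite /X; have : n%:R * Lam <= n.+1%:R * Lam by rewrite ler_wpM2r.
    have : 4 * (n.+1%:R * Lam) <= n.+1%:R * phi ^+ 2.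
      by rewrite mulrCA ler_wpM2l //; lra.
    lra.
  have eX : eta * (4 * (n%:R * Lam)) <= eta * X by rewrite ler_wpM2l //; lra.
  have eX2 : eta * (5 * X) <= eta * (144 * X * X).
    rewrite ler_wpM2l //; try lra; nra.
  have eX3 : eta * 4 <= eta * (4 * X) by rewrite ler_wpM2l //; lra.
  lra.
rewrite !loss_rep !Htr.
rewrite mulrCA; apply: ler_wpM2l; first by rewrite invr_ge0.
rewrite mulr_sumr; apply: ler_sum => i _.
pose a k := (pqseq n eta k).1.[lam i].
pose b k := (pqseq n eta k).2.[lam i].
have a0 : a 0%N = 1 by rewrite /a /= hornerC.
have b0 : b 0%N = 0 by rewrite /b /= hornerC.
have PS k : pqseq n eta k.+1 = pqstep n eta (pqseq n eta k) by [].

have bS k : b k.+1 = b k - eta * (b k * a k ^+ n - 1) * a k ^+ n.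
  rewrite /b /a PS /pqstep /= -polyC1 !(hornerD, hornerN, hornerZ, hornerM, horner_exp, hornerX, hornerC); ring.
have aS k : a k.+1 = a k - eta * (lam i * b k * (b k * a k ^+ n - 1) * a k ^+ n.-1).
  rewrite /b /a PS /pqstep /= -polyC1 !(hornerD, hornerN, hornerZ, hornerM, horner_exp, hornerX, hornerC); ring.
have HC := scalar_main e0 (lam0 i) (lamL i) cond a0 b0 bS aS t.
rewrite (_ : pqseq n eta 0 = (1,0)) // -polyC1 !(hornerD, hornerN, hornerZ, hornerM, horner_exp, hornerX, hornerC).
rewrite -/(a t) -/(b t) /=.
rewrite expr1n mul0r sub0r.
set C := b t * a t ^+ n - 1 in HC *.
have := lam0 i.
have : C * lam i * C = C ^+ 2 * lam i by rewrite expr2; ring.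
move=> ->.
have -> : (1 - eta / 2) ^+ t * (-1 * lam i * -1) = (1 - eta / 2) ^+ t * lam i by ring.
move=> l0; rewrite ler_wpM2r //.
Qed.
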